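(* Let $Q$ be a connected conjunctive query without self-joins such that $Q$ contains no free sequence and the renamed query of $Q$ contains no nested clique. Then $Q$ has the head-domination property.
   Context: A conjunctive query (CQ) without self-joins is $Q(\mathbf{A}) :- R_1(\mathbb{A}_1), \ldots, R_m(\mathbb{A}_m)$ with pairwise distinct relation symbols, $\mathrm{attr}(R_i)=\mathbb{A}_i$, $\mathrm{attr}(Q)=\bigcup_i\mathbb{A}_i$, output attributes $\mathrm{head}(Q)=\mathbf{A}$, $\mathrm{head}(R_i)=\mathrm{head}(Q)\cap\mathrm{attr}(R_i)$. $Q$ is connected if the graph on its relations with edges between relations sharing an attribute is connected. A free sequence of $Q$ is a sequence of attributes $\langle A_1,\ldots,A_k\rangle$ with $A_1,A_k\in\mathrm{head}(Q)$, $A_2,\ldots,A_{k-1}\in\mathrm{attr}(Q)\setminus\mathrm{head}(Q)$, such that for every $i\in[k-1]$ some relation contains $A_i,A_{i+1}$, and no relation contains both $A_1$ and $A_k$. The graph $H_Q$ has the non-output attributes as vertices and an edge between two of them if some relation contains both; if $H_1,\ldots,H_k$ are its connected components, the renamed query $Q'$ has the same output attributes as $Q$, fresh attributes $F_1,\ldots,F_k$, and for each $R_i$ a relation $R_i'$ with $\mathrm{attr}(R_i')=\mathrm{head}(R_i)\cup\{F_j: H_j\cap\mathrm{attr}(R_i)\neq\emptyset\}$. In a CQ $Q''$, a nested clique is a set $P\subseteq\mathrm{attr}(Q'')$ such that each pair of attributes of $P$ occurs together in some relation; $P\cap\mathrm{head}(Q'')\neq\emptyset$ and $P\setminus\mathrm{head}(Q'')\neq\emptyset$;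 and no relation $R_j$ of $Q''$ satisfies $P\cap\mathrm{head}(Q'')\subseteq\mathrm{head}(R_j)$. $G^\exists_Q$ has as vertices the relations with $\mathrm{attr}(R_i)\setminus\mathrm{head}(Q)\neq\emptyset$ and an edge between $R_i,R_j$ if $(\mathrm{attr}(R_i)\cap\mathrm{attr}(R_j))\setminus\mathrm{head}(Q)\neq\emptyset$. A relation $R_i$ is dominant for a set $E$ of relations if $\bigcup_{R_j\in E}\mathrm{head}(R_j)\subseteq\mathrm{head}(R_i)$. $Q$ has the head-domination property if for every connected component $E$ of $G^\exists_Q$ some relation of $Q$ is dominant for $E$. *)

(* Defs.v *)
From mathcomp Require Import all_boot.
Set Implicit Arguments. Unset Strict Implicit. Unset Printing Implicit Defensive.

(* A conjunctive query without self-joins: relations are indexed by 'I_nrel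
   (so relation symbols are pairwise distinct by construction); each relation
   R_i has attribute set [atom i]; [headQ] is the set of output attributes. *)
Record cq := CQ {
  attrT : finType;
  nrel : nat;
  atom : 'I_nrel -> {set attrT};
  headQ : {set attrT}
}.

Arguments atom : clear implicits.

Section CQDefs.
Variable Q : cq.
Local Notation T := (attrT Q).
Local Notation I := ('I_(nrel Q)).

Definition attrQ : {set T} := \bigcup_(i : I) atom Q i.
Definition wf_cq : Prop := headQ Q \subset attrQ.
Definition headR (i : I) : {set T} := headQ Q :&: atom Q i.
Definition exQ : {set T} := attrQ :\: headQ Q.
Definition cooccur (x y : T) : bool :=
  [exists i : I, (x \in atom Q i) && (y \in atom Q i)].

Definition share_rel : rel I :=
  fun i j => [exists x : T, (x \in atom Q i) && (x \in atom Q j)].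
Definition connectedQ : Prop := forall i j : I, connect share_rel i j.

(* Free sequence <x; t...> of length k = size t + 1. *)
Definition free_seq (x : T) (t : seq T) : Prop :=
  [/\ x \in headQ Q, last x t \in headQ Q,
      all (fun z => z \in exQ) (behead (belast x t)),
      path cooccur x t
    & ~~ cooccur x (last x t)].
Definition has_free_seq : Prop := exists x t, free_seq x t.

Definition HQ_edge : rel T :=
  fun x y => [&& x \in exQ, y \in exQ & cooccur x y].
Definition HQ_comp (x : T) : {set T} := [set y | connect HQ_edge x y].

(* Renamed query Q': attributes are inl A for output attributes A and
   inr H for a connected component H of H_Q (playing the role of F_H). *)
Definition renamed_atom (i : I) : {set (T + {set T})%type} :=
  (inl @: headR i) :|: (inr @: [set HQ_comp x | x in atom Q i :\: headQ Q]).
Definition renamed : cq :=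
  @CQ (T + {set T})%type (nrel Q) renamed_atom (inl @: headQ Q).

Definition nested_clique (P : {set T}) : Prop :=
  [/\ P \subset attrQ,
      (forall x y, x \in P -> y \in P -> cooccur x y),
      P :&: headQ Q != set0,
      P :\: headQ Q != set0
    & ~~ [exists j : I, P :&: headQ Q \subset headR j]].
Definition has_nested_clique : Prop := exists P, nested_clique P.

Definition Gex_vertex (i : I) : bool := atom Q i :\: headQ Q != set0.
Definition Gex_edge : rel I :=
  fun i j => [exists x : T, [&& x \in atom Q i, x \in atom Q j & x \notin headQ Q]].
Definition Gex_comp (i : I) : {set I} := [set j | Gex_vertex j && connect Gex_edge i j].

Definition dominant (k : I) (E : {set I}) : bool :=
  \bigcup_(j in E) headR j \subset headR k.

Definition head_domination : Prop :=
  forall i : I, Gex_vertex i -> exists k : I, dominant k (Gex_comp i).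
End CQDefs.

(* Main.v *)
Require Import Defs.
From mathcomp Require Import all_boot.
Set Implicit Arguments. Unset Strict Implicit. Unset Printing Implicit Defensive.

Section Helpers.
Variable Q : cq.

Lemma exQ_atom i y : y \in atom Q i -> y \notin headQ Q -> y \in exQ Q.
Proof. by move=> ya yh; rewrite inE yh /=; apply/bigcupP; exists i. Qed.

Lemma cooccur_sym x y : @cooccur Q x y = @cooccur Q y x.
Proof.
by apply/existsP/existsP => -[k /andP [h1 h2]]; exists k; rewrite h1 h2.
Qed.

Lemma HQ_edge_sym : symmetric (@HQ_edge Q).
Proof.
move=> x y; rewrite /HQ_edge cooccur_sym.
by case: (x \in exQ Q); case: (y \in exQ Q).
Qed.

Lemma edge_same i x y : x \in atom Q i -> x \notin headQ Q ->
  y \in atom Q i -> y \notin headQ Q -> @HQ_edge Q x y.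
Proof.
move=> xa xh ya yh; rewrite /HQ_edge (exQ_atom xa xh) (exQ_atom ya yh) /=.
by apply/existsP; exists i; rewrite xa ya.
Qed.

Lemma L1 i j : connect (@Gex_edge Q) i j -> forall x y,
  x \in atom Q i -> x \notin headQ Q -> y \in atom Q j -> y \notin headQ Q ->
  connect (@HQ_edge Q) x y.
Proof.
case/connectP => p Hp ->; elim: p i Hp => [|k p IH] i /=.
  by move=> _ x y xa xh ya yh; apply: connect1; apply: (edge_same xa xh ya yh).
case/andP => /existsP [z /and3P [zi zk zh]] Hp x y xa xh ya yh.
apply: (connect_trans (connect1 (edge_same xa xh zi zh))).
exact: (IH k Hp z y zk zh ya yh).
Qed.

Lemma path_exQ x p : path (@HQ_edge Q) x p -> all (fun z => z \in exQ Q) p.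
Proof.
elim: p x => [|z p IH] x //= /andP [/and3P [_ -> _] Hp] /=.
exact: IH Hp.
Qed.

Lemma cooc_heads a b j1 j2 y1 y2 : ~ has_free_seq Q ->
  a \in headQ Q -> b \in headQ Q -> a \in atom Q j1 -> b \in atom Q j2 ->
  y1 \in atom Q j1 -> y1 \notin headQ Q -> y2 \in atom Q j2 -> y2 \notin headQ Q ->
  connect (@HQ_edge Q) y1 y2 -> @cooccur Q a b.
Proof.
move=> NF ah bh aj bj y1a y1h y2a y2h /connectP [p Hp Hl].
case: (boolP (@cooccur Q a b)) => // nab; exfalso; apply: NF; exists a, (y1 :: rcons p b); split => //.
- by rewrite /= last_rcons.
- rewrite /= belast_rcons /= (exQ_atom y1a y1h) /=; exact: path_exQ Hp.
- rewrite /= rcons_path -Hl; apply/and3P; split.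
  + by apply/existsP; exists j1; rewrite aj y1a.
  + by apply: sub_path Hp => u v /and3P [].
  + by apply/existsP; exists j2; rewrite y2a bj.
- by rewrite /= last_rcons.
Qed.

End Helpers.

Theorem lemma29 (Q : cq) :
  wf_cq Q -> connectedQ Q -> ~ has_free_seq Q ->
  ~ has_nested_clique (renamed Q) -> head_domination Q.
Proof.
move=> wf conn NF NN i Hi.
have Hi' := Hi.
case/set0Pn: Hi' => x0; rewrite inE => /andP [x0h x0a].
set S := \bigcup_(j in @Gex_comp Q i) @headR Q j.
case: (set_0Vmem S) => [S0 | [a0 a0S]].
  by exists i; rewrite /dominant -/S S0 sub0set.
set C := @HQ_comp Q x0.
have iE : i \in @Gex_comp Q i by rewrite inE Hi connect0.
have compY : forall j, j \in @Gex_comp Q i -> exists y,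
    [/\ y \in atom Q j, y \notin headQ Q & connect (@HQ_edge Q) x0 y].
  move=> j; rewrite inE => /andP [vj cij].
  case/set0Pn: vj => y; rewrite inE => /andP [yh ya].
  by exists y; split => //; exact: (L1 cij x0a x0h ya yh).
have compC : forall j, j \in @Gex_comp Q i -> inr C \in @renamed_atom Q j.
  move=> j /compY [y [ya yh cxy]].
  rewrite /renamed_atom inE; apply/orP; right; apply/imsetP; exists C => //.
  apply/imsetP; exists y; first by rewrite inE yh ya.
  rewrite /C /HQ_comp; apply/setP => z; rewrite !inE.
  apply/idP/idP => h.
    apply: connect_trans h.
    by rewrite (sym_connect_sym (@HQ_edge_sym Q)).
  exact: connect_trans cxy h.
have inlR : forall a j, a \in @headR Q j -> inl a \in @renamed_atom Q j.
  by move=> a j aj; rewrite /renamed_atom inE imset_f.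
pose P : {set (attrT Q + {set attrT Q})} := inl @: S :|: [set inr C].
case: (boolP [exists j : 'I_(nrel Q),
   (P :&: headQ (renamed Q)) \subset @headR (renamed Q) j]) =>
   [/existsP [j Hj] | Hn]; last first.
  exfalso; apply: NN; exists P; split => //.
  - apply/subsetP => z; rewrite inE => /orP [/imsetP [a aS ->] | ].
      case/bigcupP: aS => j jE aj.
      by apply/bigcupP; exists j => //; apply: inlR.
    by rewrite inE => /eqP ->; apply/bigcupP; exists i => //; apply: compC.
  - have memP : forall z, z \in P -> (exists2 j, j \in @Gex_comp Q i &
        exists2 a, a \in @headR Q j & z = inl a) \/ z = inr C.
      move=> z; rewrite inE => /orP [/imsetP [a /bigcupP [j jE aj] ->] |].
        by left; exists j => //; exists a.
      by rewrite inE => /eqP ->; right.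
    have mixed : forall j a, j \in @Gex_comp Q i -> a \in @headR Q j ->
        @cooccur (renamed Q) (inl a) (inr C).
      move=> j a jE aj; apply/existsP; exists j.
      by rewrite (inlR _ _ aj) (compC _ jE).
    move=> z w /memP [[j1 j1E [a a1 ->]] | ->] /memP [[j2 j2E [b b2 ->]] | ->].
    + case: (compY _ j1E) => y1 [y1a y1h c1].
      case: (compY _ j2E) => y2 [y2a y2h c2].
      move: a1 b2; rewrite !inE => /andP [ah aj] /andP [bh bj].
      have cy : connect (@HQ_edge Q) y1 y2.
        apply: connect_trans c2.
        by rewrite (sym_connect_sym (@HQ_edge_sym Q)).
      case/existsP: (cooc_heads NF ah bh aj bj y1a y1h y2a y2h cy) => k /andP [ak bk].
      apply/existsP; exists k.
      by rewrite !inlR // inE ?ah ?bh ?ak ?bk.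
    + exact: mixed a1.
    + by rewrite cooccur_sym; exact: mixed b2.
    + by apply/existsP; exists i; rewrite compC.
  - apply/set0Pn; exists (inl a0); rewrite !inE; apply/andP; split.
      by apply/orP; left; apply: imset_f.
    apply: imset_f; case/bigcupP: a0S => j _; rewrite inE => /andP [].
    done.
  - apply/set0Pn; exists (inr C); rewrite !inE; apply/andP; split.
      by apply/imsetP => -[? _].
    by rewrite eqxx orbT.
exists j; apply/bigcupsP => k kE; apply/subsetP => a ak.
have : inl a \in P :&: headQ (renamed Q).
  rewrite inE; apply/andP; split.
    by rewrite inE; apply/orP; left; apply: imset_f; apply/bigcupP; exists k.
  by rewrite /=; apply: imset_f; move: ak; rewrite inE => /andP [].
move/(subsetP Hj); rewrite /headR inE => /andP [_].
rewrite /= /renamed_atom inE => /orP [/imsetP [b bh [->]] // | /imsetP [? _ //]].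
Qed.
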